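(* Let $n\ge1$ and $F_n=F(1)\otimes\cdots\otimes F(n)\subseteq\mathbb{S}_n$. Then: (1) The centre of $\mathbb{S}_n$ is $K$. (2) For every nonzero $a\in\mathbb{S}_n$ one has $F_na\neq0$ and $aF_n\ne0$. (3) $F_n$ is the smallest nonzero ideal of $\mathbb{S}_n$, i.e. it is contained in every nonzero ideal. Moreover, $F_n^2=F_n$, and $F_n$ is an essential left and right submodule of $\mathbb{S}_n$. $F_n$ is the socle of $\mathbb{S}_n$ as a left module and as a right module, $F_n$ is the socle of the $\mathbb{S}_n$-bimodule $\mathbb{S}_n$, and $F_n$ is a simple $\mathbb{S}_n$-bimodule. (4) $\mathbb{S}_n$ is a prime algebra. (5) Every nonzero ideal of $\mathbb{S}_n$ is an essential left and right submodule of $\mathbb{S}_n$.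
   Context: $K$ is a field. $\mathbb{S}_n$ is the $K$-algebra generated by $x_1,\dots,x_n,y_1,\dots,y_n$ subject to the defining relations $y_ix_i=1$ for all $i$, and $[x_i,y_j]=[x_i,x_j]=[y_i,y_j]=0$ for all $i\ne j$. For each $i$, $\mathbb{S}_1(i)$ is the subalgebra generated by $x_i,y_i$, and $\mathbb{S}_n=\mathbb{S}_1(1)\otimes\cdots\otimes\mathbb{S}_1(n)$. $F(i)=\bigoplus_{k,l\in\mathbb N}K(x_i^ky_i^l-x_i^{k+1}y_i^{l+1})$, an ideal of $\mathbb{S}_1(i)$. *)

(* Defs.v *)
(* The Jacobson algebra S_n is specified by its presentation
   (universal property) inside an arbitrary K-algebra A. *)
From HB Require Import structures.
From mathcomp Require Import all_boot all_order all_algebra.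
Set Implicit Arguments. Unset Strict Implicit. Unset Printing Implicit Defensive.
Import GRing.Theory.
Local Open Scope ring_scope.

Section JacobsonDefs.
Variables (K : fieldType) (A : algType K) (n : nat).

Definition jacobson_relations (B : algType K) (x y : 'I_n -> B) : Prop :=
  (forall i, y i * x i = 1) /\
  (forall i j, i != j ->
     [/\ x i * y j = y j * x i, x i * x j = x j * x i & y i * y j = y j * y i]).

Definition is_jacobson_presentation (x y : 'I_n -> A) : Prop :=
  jacobson_relations x y /\
  forall (B : algType K) (bx bY : 'I_n -> B), jacobson_relations bx bY ->
    (exists f : {lrmorphism A -> B}, forall i, f (x i) = bx i /\ f (y i) = bY i) /\
    (forall f g : {lrmorphism A -> B},
        (forall i, f (x i) = g (x i) /\ f (y i) = g (y i)) -> forall a, f a = g a).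

Definition inspan (S : A -> Prop) (v : A) : Prop :=
  exists (m : nat) (c : 'I_m -> K) (s : 'I_m -> A),
    (forall j, S (s j)) /\ v = \sum_(j < m) c j *: s j.

(* Two-sided ideals, left and right ideals (= left/right submodules of A). *)
Definition is_left_ideal (I : A -> Prop) : Prop :=
  [/\ I 0, (forall u v, I u -> I v -> I (u + v)) & (forall a u, I u -> I (a * u))].
Definition is_right_ideal (I : A -> Prop) : Prop :=
  [/\ I 0, (forall u v, I u -> I v -> I (u + v)) & (forall a u, I u -> I (u * a))].
Definition is_ideal (I : A -> Prop) : Prop := is_left_ideal I /\ is_right_ideal I.

Definition nonzero_set (I : A -> Prop) : Prop := exists v, I v /\ v <> 0.
Definition subset_of (I J : A -> Prop) : Prop := forall v, I v -> J v.
Definition same_set (I J : A -> Prop) : Prop := forall v, I v <-> J v.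

Definition essential_left (I : A -> Prop) : Prop :=
  is_left_ideal I /\
  forall L, is_left_ideal L -> nonzero_set L -> nonzero_set (fun v => L v /\ I v).
Definition essential_right (I : A -> Prop) : Prop :=
  is_right_ideal I /\
  forall L, is_right_ideal L -> nonzero_set L -> nonzero_set (fun v => L v /\ I v).

Definition simple_left (L : A -> Prop) : Prop :=
  is_left_ideal L /\ nonzero_set L /\
  forall L', is_left_ideal L' -> subset_of L' L ->
    (forall v, L' v -> v = 0) \/ same_set L' L.
Definition simple_right (L : A -> Prop) : Prop :=
  is_right_ideal L /\ nonzero_set L /\
  forall L', is_right_ideal L' -> subset_of L' L ->
    (forall v, L' v -> v = 0) \/ same_set L' L.
Definition simple_bimodule (L : A -> Prop) : Prop :=
  is_ideal L /\ nonzero_set L /\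
  forall L', is_ideal L' -> subset_of L' L ->
    (forall v, L' v -> v = 0) \/ same_set L' L.

Definition left_socle : A -> Prop :=
  inspan (fun w => exists L, simple_left L /\ L w).
Definition right_socle : A -> Prop :=
  inspan (fun w => exists L, simple_right L /\ L w).
Definition bimodule_socle : A -> Prop :=
  inspan (fun w => exists L, simple_bimodule L /\ L w).

Definition set_prod (I J : A -> Prop) : A -> Prop :=
  inspan (fun w => exists u v, I u /\ J v /\ w = u * v).

Definition prime_algebra : Prop :=
  forall I J, is_ideal I -> is_ideal J ->
    (forall u v, I u -> J v -> u * v = 0) ->
    (forall u, I u -> u = 0) \/ (forall v, J v -> v = 0).

Definition center_is_scalars : Prop :=
  forall a : A, (forall b : A, a * b = b * a) <-> exists c : K, a = c%:A.

Definition Fgen (x y : 'I_n -> A) (i : 'I_n) (k l : nat) : A :=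
  x i ^+ k * y i ^+ l - x i ^+ k.+1 * y i ^+ l.+1.
Definition Fi (x y : 'I_n -> A) (i : 'I_n) : A -> Prop :=
  inspan (fun w => exists k l, w = Fgen x y i k l).
(* F_n = F(1) ⊗ ... ⊗ F(n) inside S_n: the span of products of elements of the F(i). *)
Definition Fn (x y : 'I_n -> A) : A -> Prop :=
  inspan (fun w => exists f : 'I_n -> A, (forall i, Fi x y i (f i)) /\
                   w = \prod_(i < n) f i).

End JacobsonDefs.

(* Main.v *)
Require Import Defs.
From HB Require Import structures.
From mathcomp Require Import all_boot all_order all_algebra.
From Stdlib Require Import Classical ClassicalEpsilon FunctionalExtensionality ProofIrrelevance.
Import GRing.Theory.
Local Open Scope ring_scope.

Section Span.
Variables (K : fieldType) (A : algType K).
Implicit Types (S T R I : A -> Prop).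

Lemma inspan0 S : inspan S 0.
Proof. exists 0%N, (fun _ => 0), (fun _ => 0); split; first by case. by rewrite big_ord0. Qed.

Lemma inspan_of S v : S v -> inspan S v.
Proof. move=> h; exists 1%N, (fun _ => 1), (fun _ => v); split=> //.
by rewrite big_ord1 scale1r. Qed.

Lemma inspanD S u v : inspan S u -> inspan S v -> inspan S (u + v).
Proof.
move=> [m1 [c1 [s1 [h1 ->]]]] [m2 [c2 [s2 [h2 ->]]]].
exists (m1 + m2)%N, (fun j => match split j with inl a => c1 a | inr b => c2 b end),
  (fun j => match split j with inl a => s1 a | inr b => s2 b end); split.
  by move=> j; case: split.
rewrite big_split_ord /=; congr (_ + _); apply: eq_bigr => j _.
  by have -> : lshift m2 j = unsplit (inl j) by []; rewrite unsplitK.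
by have -> : rshift m1 j = unsplit (inr j) by []; rewrite unsplitK.
Qed.

Lemma inspanZ S c u : inspan S u -> inspan S (c *: u).
Proof.
move=> [m [c1 [s1 [h1 ->]]]]; exists m, (fun j => c * c1 j), s1; split=> //.
by rewrite scaler_sumr; apply: eq_bigr => j _; rewrite scalerA.
Qed.

Lemma inspan_sum S (I : eqType) (r : seq I) (F : I -> A) :
  (forall j, inspan S (F j)) -> inspan S (\sum_(j <- r) F j).
Proof.
move=> h; elim: r => [|j r IH]; first by rewrite big_nil; apply: inspan0.
by rewrite big_cons; apply: inspanD.
Qed.

Lemma inspan_bind S T (g : A -> A) u :
  (forall m (c : 'I_m -> K) s, g (\sum_(j < m) c j *: s j) = \sum_(j < m) c j *: g (s j)) ->
  (forall s, S s -> inspan T (g s)) -> inspan S u -> inspan T (g u).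
Proof.
move=> hg hS [m [c [s [hs ->]]]]; rewrite hg.
by apply: inspan_sum => j; apply: inspanZ; apply: hS.
Qed.

Lemma inspan_mono S T u : (forall s, S s -> inspan T s) -> inspan S u -> inspan T u.
Proof. by move=> h; apply: (@inspan_bind S T id). Qed.

Lemma inspan_mull S T w u : (forall s, S s -> inspan T (w * s)) -> inspan S u -> inspan T (w * u).
Proof.
move=> h; apply: (@inspan_bind S T (fun v => w * v)) => // m c s.
by rewrite mulr_sumr; apply: eq_bigr => j _; rewrite scalerAr.
Qed.

Lemma inspan_mulr S T w u : (forall s, S s -> inspan T (s * w)) -> inspan S u -> inspan T (u * w).
Proof.
move=> h; apply: (@inspan_bind S T (fun v => v * w)) => // m c s.
by rewrite mulr_suml; apply: eq_bigr => j _; rewrite scalerAl.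
Qed.

Lemma inspan_mul S T R u v : (forall s t, S s -> T t -> inspan R (s * t)) ->
  inspan S u -> inspan T v -> inspan R (u * v).
Proof.
move=> h hu hv; apply: (@inspan_mulr S) hu => s hs.
by apply: (@inspan_mull T) hv => t ht; apply: h.
Qed.

Lemma ideal_span S I u : is_left_ideal I -> (forall s, S s -> I s) -> inspan S u -> I u.
Proof.
move=> [I0 ID IM] hS [m [c [s [hs ->]]]].
elim/big_rec: _ => // j v _ Iv; apply: ID => //.
by rewrite -mulr_algl; apply: IM; apply: hS.
Qed.

Lemma ideal_scale I c u : is_left_ideal I -> I u -> I (c *: u).
Proof. by move=> [_ _ IM] Iu; rewrite -mulr_algl; apply: IM. Qed.

End Span.
Section Prods.
Variables (R : pzRingType) (I : eqType).

Lemma comm_prod_seq (a : R) (F : I -> R) (s : seq I) :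
  (forall k, k \in s -> GRing.comm a (F k)) -> GRing.comm a (\prod_(k <- s) F k).
Proof.
elim: s => [|k s IH] h; first by rewrite big_nil; apply: commr1.
rewrite big_cons; apply: commrM; first by apply: h; rewrite inE eqxx.
by apply: IH => j hj; apply: h; rewrite inE hj orbT.
Qed.

Lemma prod_split_seq (f g : I -> R) (s : seq I) : uniq s ->
  (forall i j, i != j -> GRing.comm (g i) (f j)) ->
  \prod_(i <- s) (f i * g i) = (\prod_(i <- s) f i) * \prod_(i <- s) g i.
Proof.
move=> us hc; elim: s us => [|i s IH] /=; first by rewrite !big_nil mulr1.
case/andP=> nis us; rewrite !big_cons IH //.
have hg : GRing.comm (g i) (\prod_(j <- s) f j).
  by apply: comm_prod_seq => j js; apply: hc; apply: contraNneq nis => ->.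
by rewrite -!mulrA; congr (_ * _); rewrite !mulrA hg.
Qed.

Lemma prod0_seq (F : I -> R) (s : seq I) j : j \in s -> F j = 0 -> \prod_(i <- s) F i = 0.
Proof.
move=> js Fj; elim: s js => [|k s IH] //; rewrite inE big_cons => /orP [/eqP <-|js].
  by rewrite Fj mul0r.
by rewrite IH // mulr0.
Qed.

Lemma prod_single_seq (F : I -> R) (s : seq I) j : uniq s -> j \in s ->
  (forall i, i != j -> F i = 1) -> \prod_(i <- s) F i = F j.
Proof.
move=> us js h; elim: s us js => [|k s IH] //= /andP [ks us]; rewrite inE big_cons.
case/orP=> [/eqP Ejk|js].
  subst k; rewrite big1_seq ?mulr1 // => i /andP [_ iis]; apply: h.
  by apply/eqP => E; subst; rewrite iis in ks.
have kj : k != j by apply/eqP => E; subst; rewrite js in ks.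
by rewrite IH // h ?mul1r.
Qed.
End Prods.

Lemma commXX (R : pzRingType) (u v : R) a b : GRing.comm u v -> GRing.comm (u ^+ a) (v ^+ b).
Proof. by move=> h; apply: commrX; apply: commr_sym; apply: commrX; apply: commr_sym. Qed.

Section Alg.
Variables (K : fieldType) (A : algType K) (n : nat) (x y : 'I_n -> A).
Hypothesis hyx : forall i, y i * x i = 1.
Hypothesis hc : forall i j, i != j ->
  [/\ x i * y j = y j * x i, x i * x j = x j * x i & y i * y j = y j * y i].

Definition X (a : 'I_n -> nat) := \prod_(i < n) x i ^+ a i.
Definition Y (b : 'I_n -> nat) := \prod_(i < n) y i ^+ b i.
Definition ei i := 1 - x i * y i.
Definition e := \prod_(i < n) ei i.
Definition M a b := X a * Y b.
Definition E a b := X a * e * Y b.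

Lemma comm_xx i j : GRing.comm (x i) (x j).
Proof. by case: (eqVneq i j) => [->|/hc [] //]; apply: commr_refl. Qed.
Lemma comm_yy i j : GRing.comm (y i) (y j).
Proof. by case: (eqVneq i j) => [->|/hc [] //]; apply: commr_refl. Qed.
Lemma comm_xy i j : i != j -> GRing.comm (x i) (y j).
Proof. by move=> /hc []. Qed.
Lemma comm_yx i j : i != j -> GRing.comm (y i) (x j).
Proof. by rewrite eq_sym => /hc [h _ _]; rewrite /GRing.comm h. Qed.
Lemma comm_xe i j : i != j -> GRing.comm (x i) (ei j).
Proof. by move=> h; apply: commrB; [apply: commr1|apply: commrM; [apply: comm_xx|apply: comm_xy]]. Qed.
Lemma comm_ye i j : i != j -> GRing.comm (y i) (ei j).
Proof. by move=> h; apply: commrB; [apply: commr1|apply: commrM; [apply: comm_yx|apply: comm_yy]]. Qed.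
Lemma comm_ee i j : GRing.comm (ei i) (ei j).
Proof.
case: (eqVneq i j) => [->|h]; first by apply: commr_refl.
apply: commrB; first by apply: commr1.
apply: commrM; apply: commr_sym; [apply: comm_xe|apply: comm_ye]; by rewrite eq_sym.
Qed.

Lemma prod_split (f g : 'I_n -> A) : (forall i j, i != j -> GRing.comm (g i) (f j)) ->
  \prod_(i < n) (f i * g i) = (\prod_(i < n) f i) * \prod_(i < n) g i.
Proof. by move=> h; apply: prod_split_seq => //; apply: index_enum_uniq. Qed.

Lemma yx_pow i a b : y i ^+ a * x i ^+ b = x i ^+ (b - a) * y i ^+ (a - b).
Proof.
elim: a b => [|a IH] b; first by rewrite subn0 sub0n !expr0 mul1r mulr1.
case: b => [|b]; first by rewrite sub0n subn0 !expr0 mulr1 mul1r.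
by rewrite exprSr exprS mulrA -(mulrA _ (y i)) hyx mulr1 IH !subSS.
Qed.

Lemma ex i : ei i * x i = 0.
Proof. by rewrite /ei mulrBl mul1r -mulrA hyx mulr1 subrr. Qed.
Lemma ye i : y i * ei i = 0.
Proof. by rewrite /ei mulrBr mulr1 mulrA hyx mul1r subrr. Qed.
Lemma eiei i : ei i * ei i = ei i.
Proof. by rewrite {2}/ei mulrBr mulr1 mulrA ex mul0r subr0. Qed.

Lemma ex_pow i k : ei i * x i ^+ k = if k == 0%N then ei i else 0.
Proof. by case: k => [|k] /=; rewrite ?expr0 ?mulr1 // exprS mulrA ex mul0r. Qed.
Lemma ye_pow i k : y i ^+ k * ei i = if k == 0%N then ei i else 0.
Proof. by case: k => [|k] /=; rewrite ?expr0 ?mul1r // exprSr -mulrA ye mulr0. Qed.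

Lemma X0 : X (fun _ => 0%N) = 1.
Proof. by rewrite /X big1 // => i _; rewrite expr0. Qed.
Lemma Y0 : Y (fun _ => 0%N) = 1.
Proof. by rewrite /Y big1 // => i _; rewrite expr0. Qed.

Lemma Xadd a b : X (fun i => a i + b i)%N = X a * X b.
Proof.
rewrite /X -prod_split; first by apply: eq_bigr => i _; rewrite exprD.
by move=> i j _; apply: commXX; apply: comm_xx.
Qed.
Lemma Yadd a b : Y (fun i => a i + b i)%N = Y a * Y b.
Proof.
rewrite /Y -prod_split; first by apply: eq_bigr => i _; rewrite exprD.
by move=> i j _; apply: commXX; apply: comm_yy.
Qed.

Lemma YX c a : Y c * X a = X (fun i => a i - c i)%N * Y (fun i => c i - a i)%N.
Proof.
rewrite /X /Y -prod_split; last by move=> i j h; apply: commXX; apply: comm_xy.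
rewrite -prod_split; last by move=> i j h; apply: commXX; apply: comm_yx.
by apply: eq_bigr => i _; rewrite yx_pow.
Qed.

Lemma eX m : e * X m = if [forall i, m i == 0%N] then e else 0.
Proof.
rewrite /e /X -prod_split; last first.
  by move=> i j h; apply: commr_sym; apply: commrX; apply: commr_sym; apply: comm_xe.
case: ifP => [/forallP h|/negbT]; first by apply: eq_bigr => i _; rewrite ex_pow h.
rewrite negb_forall => /existsP [j hj].
by apply: (@prod0_seq _ _ _ _ j); rewrite ?mem_index_enum // ex_pow (negbTE hj).
Qed.

Lemma Ye m : Y m * e = if [forall i, m i == 0%N] then e else 0.
Proof.
rewrite /e /Y -prod_split; last first.
  by move=> i j h; apply: commrX; apply: commr_sym; apply: comm_ye; rewrite eq_sym.
case: ifP => [/forallP h|/negbT]; first by apply: eq_bigr => i _; rewrite ye_pow h.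
rewrite negb_forall => /existsP [j hj].
by apply: (@prod0_seq _ _ _ _ j); rewrite ?mem_index_enum // ye_pow (negbTE hj).
Qed.

Lemma ee : e * e = e.
Proof.
rewrite /e -prod_split; last by move=> i j _; apply: comm_ee.
by apply: eq_bigr => i _; rewrite eiei.
Qed.

Lemma xX j : x j = X (fun i => (i == j : nat)).
Proof.
rewrite /X (@prod_single_seq _ _ _ _ j) ?index_enum_uniq ?mem_index_enum ?eqxx ?expr1 //.
by move=> i /negbTE ->; rewrite expr0.
Qed.
Lemma yY j : y j = Y (fun i => (i == j : nat)).
Proof.
rewrite /Y (@prod_single_seq _ _ _ _ j) ?index_enum_uniq ?mem_index_enum ?eqxx ?expr1 //.
by move=> i /negbTE ->; rewrite expr0.
Qed.

Lemma MM a b c d : M a b * M c d = M (fun i => a i + (c i - b i))%N (fun i => (b i - c i) + d i)%N.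
Proof. by rewrite /M Xadd Yadd -!mulrA; congr (_ * _); rewrite !mulrA YX -!mulrA. Qed.

Lemma forall_and (P Q : pred 'I_n) :
  [forall i, P i] && [forall i, Q i] = [forall i, P i && Q i].
Proof.
apply/andP/forallP => [[/forallP hP /forallP hQ] i|h]; first by rewrite hP hQ.
by split; apply/forallP => i; case/andP: (h i).
Qed.

Lemma eYXe g d : e * Y g * X d * e = if [forall i, g i == d i] then e else 0.
Proof.
rewrite -(mulrA e) YX mulrA eX -mulrA Ye.
case: ifP => h1; case: ifP => h2; rewrite ?mulr0 ?mul0r ?ee.
- by rewrite (_ : [forall i, _] = true) //; apply/forallP => i;
    move/forallP: h1 => /(_ i); move/forallP: h2 => /(_ i);
    rewrite !subn_eq0 => h2 h1; rewrite eqn_leq h1 h2.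
- by rewrite (_ : [forall i, _] = false) //; apply/negbTE; move/negbT: h2;
    rewrite !negb_forall => /existsP [i hi]; apply/existsP; exists i;
    apply: contra hi => /eqP ->; rewrite subnn.
- by rewrite (_ : [forall i, _] = false) //; apply/negbTE; move/negbT: h1;
    rewrite !negb_forall => /existsP [i hi]; apply/existsP; exists i;
    apply: contra hi => /eqP ->; rewrite subnn.
- by rewrite (_ : [forall i, _] = false) //; apply/negbTE; move/negbT: h1;
    rewrite !negb_forall => /existsP [i hi]; apply/existsP; exists i;
    apply: contra hi => /eqP ->; rewrite subnn.
Qed.

Definition condb (g d a b : 'I_n -> nat) :=
  [forall i, a i <= g i]%N && [forall i, (g i - a i + b i)%N == d i].

Lemma eYMXe g d a b : e * Y g * M a b * X d * e = if condb g d a b then e else 0.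
Proof.
rewrite /M /condb !mulrA -(mulrA e) YX mulrA eX.
have -> : [forall i, (a i - g i)%N == 0%N] = [forall i, a i <= g i]%N.
  by apply: eq_forallb => i; rewrite subn_eq0.
case: ifP => h /=; last by rewrite !mul0r.
by rewrite -(mulrA e) -Yadd eYXe.
Qed.


Lemma le_sum_eq (a b : 'I_n -> nat) : (forall i, a i <= b i)%N ->
  (\sum_i b i <= \sum_i a i)%N -> forall i, a i = b i.
Proof.
move=> h1 h2.
have E1 : (\sum_i b i = \sum_i (b i - a i) + \sum_i a i)%N.
  rewrite -big_split; apply: eq_bigr => i _ /=; by rewrite subnK.
move: h2; rewrite E1 -{2}(add0n (\sum_i a i)) leq_add2r leqn0 sum_nat_eq0.
move=> /forallP h i; apply/eqP; rewrite eqn_leq h1 -subn_eq0; exact: h.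
Qed.

Lemma exists_min (T : eqType) (r : seq T) (f : T -> nat) : r != [::] ->
  exists2 j0, j0 \in r & forall j, j \in r -> (f j0 <= f j)%N.
Proof.
elim: r => [|k r IH] // _; case: (eqVneq r [::]) => [->|/IH [j1 j1r h1]].
  by exists k; rewrite ?inE // => j; rewrite inE => /eqP ->.
case: (leqP (f k) (f j1)) => hk.
  exists k; first by rewrite inE eqxx.
  move=> j; rewrite inE => /orP [/eqP ->//|jr]; exact: leq_trans hk (h1 _ jr).
exists j1; first by rewrite inE j1r orbT.
move=> j; rewrite inE => /orP [/eqP ->|jr]; [exact: ltnW|exact: h1].
Qed.

Definition monS := fun w => exists a b, w = M a b.
Definition EgS := fun w => exists a b, w = E a b.
Definition spanE := inspan EgS.

Lemma inspan_sandwich (S T : A -> Prop) p q u :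
  (forall s, S s -> inspan T (p * s * q)) -> inspan S u -> inspan T (p * u * q).
Proof.
move=> h; apply: (@inspan_bind K A S T (fun v => p * v * q)) => // m c s.
rewrite mulr_sumr mulr_suml; apply: eq_bigr => j _; by rewrite -scalerAr -scalerAl.
Qed.

Lemma span_e_coef u : inspan (fun w => w = e) u -> exists c, u = c *: e.
Proof.
move=> [m [c [s [hs ->]]]]; exists (\sum_(j < m) c j); rewrite scaler_suml.
by apply: eq_bigr => j _; rewrite hs.
Qed.

Hypothesis hgen : forall a, inspan monS a.
Hypothesis he : e != 0.

Lemma coef a g d : exists c, e * Y g * a * X d * e = c *: e.
Proof.
apply: span_e_coef; rewrite -(mulrA _ (X d)).
apply: (inspan_sandwich monS); last exact: hgen.
move=> s [a' [b' ->]]; rewrite mulrA eYMXe.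
by case: ifP => _; [apply: inspan_of|apply: inspan0].
Qed.

Lemma faith_seq (m : nat) (c : 'I_m -> K) (al be : 'I_m -> 'I_n -> nat) N (r : seq 'I_m) :
  (size r <= N)%N ->
  (forall g d, e * Y g * (\sum_(j <- r) c j *: M (al j) (be j)) * X d * e = 0) ->
  \sum_(j <- r) c j *: M (al j) (be j) = 0.
Proof.
elim: N r => [|N IH] r hr h.
  by move: hr; rewrite leqn0 => /nilP ->; rewrite big_nil.
case: (eqVneq r [::]) => [->|rn]; first by rewrite big_nil.
have [j0 j0r hmin] := @exists_min _ r (fun j => \sum_i al j i)%N rn.
set g := al j0; set d := be j0.
pose cnd := fun j => condb g d (al j) (be j).
have hsum : \sum_(j <- r | cnd j) c j = 0.
  have := h g d.
  rewrite (_ : e * Y g * _ * X d * e = (\sum_(j <- r | cnd j) c j) *: e).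
    by move/eqP; rewrite scaler_eq0 (negbTE he) orbF => /eqP.
  rewrite mulr_sumr !mulr_suml scaler_suml [RHS]big_mkcond /=; apply: eq_bigr => j _.
  rewrite -scalerAr -!scalerAl eYMXe /cnd; case: ifP => _; by rewrite ?scaler0.
have hcnd : forall j, j \in r -> cnd j -> M (al j) (be j) = M g d.
  move=> j jr /andP [/forallP h1 /forallP h2].
  have ha := le_sum_eq _ _ h1 (hmin j jr).
  rewrite /M /X /Y; congr (_ * _); apply: eq_bigr => i _; first by rewrite ha.
  by move: (h2 i); rewrite ha subnn add0n => /eqP ->.
have Er : \sum_(j <- r) c j *: M (al j) (be j) =
          \sum_(j <- [seq j <- r | ~~ cnd j]) c j *: M (al j) (be j).
  rewrite (bigID cnd) /=.
  have -> : \sum_(j <- r | cnd j) c j *: M (al j) (be j) = 0.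
    rewrite big_seq_cond (eq_bigr (fun j => c j *: M g d)); last first.
      by move=> j /andP [jr cj]; rewrite hcnd.
    by rewrite -scaler_suml -big_seq_cond hsum scale0r.
  by rewrite add0r big_filter.
rewrite Er in h *; apply: IH => //.
have c0 : cnd j0.
  rewrite /cnd /condb; apply/andP; split; apply/forallP => i; by rewrite ?subnn ?add0n.
have hc0 : (0 < count cnd r)%N by rewrite -has_count; apply/hasP; exists j0.
rewrite size_filter -ltnS; apply: leq_trans hr.
rewrite -(count_predC cnd r) -[X in (X < _)%N]add0n ltn_add2r //.
Qed.

Lemma faith a : (forall g d, e * Y g * a * X d * e = 0) -> a = 0.
Proof.
have [m [c [s [hs Ea]]]] := hgen a.
pose al j := proj1_sig (constructive_indefinite_description _ (hs j)).
have hs' : forall j, exists b, s j = M (al j) b.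
  by move=> j; exact: (proj2_sig (constructive_indefinite_description _ (hs j))).
pose be j := proj1_sig (constructive_indefinite_description _ (hs' j)).
have hs'' : forall j, s j = M (al j) (be j).
  by move=> j; exact: (proj2_sig (constructive_indefinite_description _ (hs' j))).
have -> : a = \sum_(j <- index_enum 'I_m) c j *: M (al j) (be j).
  by rewrite Ea; apply: eq_bigr => j _; rewrite hs''.
move=> h; exact: (@faith_seq m c al be (size (index_enum 'I_m))).
Qed.

Lemma faith' a : a != 0 -> exists g d, e * Y g * a * X d * e != 0.
Proof.
move=> ha; case: (classic (exists g d, e * Y g * a * X d * e != 0)) => // hn.
case/eqP: ha; apply: faith => g d; apply/eqP; apply/negPn/negP => hne.
by apply: hn; exists g, d.
Qed.


Lemma ME a b c d : inspan EgS (M a b * E c d).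
Proof.
rewrite /M /E !mulrA -(mulrA (X a) (Y b)) YX !mulrA -(mulrA _ (Y _) e) Ye.
case: ifP => _; last by rewrite mulr0 mul0r; apply: inspan0.
by rewrite -Xadd; apply: inspan_of; do 2 eexists.
Qed.

Lemma EM c d a b : inspan EgS (E c d * M a b).
Proof.
rewrite /M /E !mulrA -(mulrA _ (Y d) (X a)) YX !mulrA -(mulrA _ e (X _)) eX.
case: ifP => _; last by rewrite mulr0 !mul0r; apply: inspan0.
by rewrite -mulrA -Yadd; apply: inspan_of; do 2 eexists.
Qed.

Lemma spanE_left w u : spanE u -> spanE (w * u).
Proof.
move=> hu; apply: (@inspan_mul K A monS EgS EgS) => //.
by move=> s t [a [b ->]] [c [d ->]]; apply: ME.
Qed.

Lemma spanE_right w u : spanE u -> spanE (u * w).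
Proof.
move=> hu; apply: (@inspan_mul K A EgS monS EgS) => //.
by move=> s t [c [d ->]] [a [b ->]]; apply: EM.
Qed.

Lemma spanE_ideal : is_ideal spanE.
Proof.
split; split; rewrite /spanE; try exact: inspan0; try exact: inspanD.
  by move=> a u; apply: spanE_left.
by move=> a u; apply: spanE_right.
Qed.

Lemma e_E : e = E (fun _ => 0%N) (fun _ => 0%N).
Proof. by rewrite /E X0 Y0 mul1r mulr1. Qed.

Lemma e_spanE : spanE e.
Proof. by rewrite e_E; apply: inspan_of; do 2 eexists. Qed.

Lemma Fgen_eq i k l : Fgen x y i k l = x i ^+ k * ei i * y i ^+ l.
Proof.
by rewrite /Fgen /ei mulrBr mulrBl mulr1 exprSr exprS !mulrA.
Qed.

Lemma prodFgen a b : \prod_(i < n) Fgen x y i (a i) (b i) = E a b.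
Proof.
rewrite (eq_bigr (fun i => (x i ^+ a i * ei i) * y i ^+ b i)); last by move=> i _; rewrite Fgen_eq.
rewrite prod_split; last first.
  move=> i j h; apply: commrM.
    by apply: commXX; apply: comm_yx.
  by apply: commr_sym; apply: commrX; apply: commr_sym; apply: comm_ye.
rewrite prod_split //.
by move=> i j h; apply: commrX; apply: commr_sym; apply: comm_xe; rewrite eq_sym.
Qed.

Lemma prodF_span (f : 'I_n -> A) (hf : forall i, Fi x y i (f i)) (s : seq 'I_n) :
  uniq s ->
  inspan (fun w => exists k l : 'I_n -> nat, w = \prod_(i <- s) Fgen x y i (k i) (l i))
         (\prod_(i <- s) f i).
Proof.
elim: s => [|i s IH] /=.
  by move=> _; apply: inspan_of; exists (fun _ => 0%N), (fun _ => 0%N); rewrite !big_nil.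
case/andP=> nis us; rewrite big_cons.
apply: (@inspan_mul K A (fun w => exists k l, w = Fgen x y i k l)); [|exact: hf|exact: IH].
move=> u v [k [l ->]] [k' [l' ->]]; apply: inspan_of.
exists (fun j => if j == i then k else k' j), (fun j => if j == i then l else l' j).
rewrite big_cons eqxx; congr (_ * _); apply: eq_big_seq => j js.
by rewrite (_ : (j == i) = false) //; apply/negbTE; apply: contraNneq nis => <-.
Qed.

Lemma Fn_spanE u : Fn x y u <-> spanE u.
Proof.
rewrite /Fn /spanE; split.
  apply: inspan_mono => w [f [hf ->]].
  move: (@prodF_span f hf _ (index_enum_uniq _)); apply: inspan_mono => v [k [l ->]].
  by apply: inspan_of; exists k, l; rewrite prodFgen.
apply: inspan_mono => w [a [b ->]]; apply: inspan_of.
exists (fun i => Fgen x y i (a i) (b i)); split; last by rewrite prodFgen.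
by move=> i; apply: inspan_of; do 2 eexists.
Qed.


Lemma ideal_ext (I J : A -> Prop) : (forall v, I v <-> J v) -> is_ideal I -> is_ideal J.
Proof.
move=> h [[I0 ID IM] [_ _ IMr]]; split; split.
- by apply/h.
- by move=> u v /h hu /h hv; apply/h; apply: ID.
- by move=> a u /h hu; apply/h; apply: IM.
- by apply/h.
- by move=> u v /h hu /h hv; apply/h; apply: ID.
- by move=> a u /h hu; apply/h; apply: IMr.
Qed.

Lemma Fn_ideal : is_ideal (Fn x y).
Proof. by apply: (@ideal_ext spanE) => [v|]; [split => /Fn_spanE|apply: spanE_ideal]. Qed.

Lemma Fn_e : Fn x y e.
Proof. by apply/Fn_spanE; apply: e_spanE. Qed.

Lemma Fn_left a u : Fn x y u -> Fn x y (a * u).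
Proof. by move=> h; have [[_ _ hl] _] := Fn_ideal; apply: hl. Qed.
Lemma Fn_right a u : Fn x y u -> Fn x y (u * a).
Proof. by move=> h; have [_ [_ _ hr]] := Fn_ideal; apply: hr. Qed.

Lemma part2 a : a <> 0 ->
  (exists f, Fn x y f /\ f * a <> 0) /\ (exists f, Fn x y f /\ a * f <> 0).
Proof.
move/eqP/faith' => [g [d hne]]; split.
  exists (e * Y g); split; first by apply: Fn_right; apply: Fn_e.
  by move=> h0; move: hne; rewrite h0 !mul0r eqxx.
exists (X d * e); split; first by apply: Fn_left; apply: Fn_e.
by move=> h0; move: hne; rewrite -(mulrA _ (X d)) -(mulrA _ a) h0 mulr0 eqxx.
Qed.

Lemma e_in_ideal (I : A -> Prop) : is_ideal I -> nonzero_set I -> I e.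
Proof.
move=> [[I0 ID IM] [_ _ IMr]] [v [hv nv]].
have [g [d hne]] := faith' _ (introN eqP nv).
have [c hco] := coef v g d.
have c0 : c != 0 by apply: contraNneq hne => c0; rewrite hco c0 scale0r.
have hI : I (e * Y g * v * X d * e) by apply: (IMr); apply: (IMr); apply: (IM).
have -> : e = c^-1 *: (e * Y g * v * X d * e) by rewrite hco scalerA mulVf // scale1r.
by rewrite -mulr_algl; apply: (IM).
Qed.

Lemma Fn_min (I : A -> Prop) : is_ideal I -> nonzero_set I -> subset_of (Fn x y) I.
Proof.
move=> hI hn v /Fn_spanE; have hl := proj1 hI; apply: ideal_span => // w [a [b ->]].
have [[_ _ IM] [_ _ IMr]] := hI.
by rewrite /E; apply: (IMr); apply: (IM); apply: e_in_ideal.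
Qed.

Lemma Fn_nonzero : nonzero_set (Fn x y).
Proof. by exists e; split; [apply: Fn_e|apply/eqP]. Qed.

Lemma Fn_prod : same_set (set_prod (Fn x y) (Fn x y)) (Fn x y).
Proof.
move=> v; split.
  by apply: ideal_span; [exact: (proj1 Fn_ideal)|move=> s [u [w [hu [hw ->]]]]; apply: Fn_right].
move/Fn_spanE; apply: inspan_mono => w [a [b ->]]; apply: inspan_of.
exists (X a * e), (e * Y b); split; first by apply: Fn_left; apply: Fn_e.
split; first by apply: Fn_right; apply: Fn_e.
by rewrite /E [RHS]mulrA -(mulrA _ e e) ee.
Qed.

Lemma ess_left (I : A -> Prop) : is_ideal I -> nonzero_set I -> essential_left I.
Proof.
move=> hI hn; split; first exact: (proj1 hI).
move=> L [_ _ hL] [v [hv nv]]; have [[f [hf nf]] _] := part2 _ nv.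
by exists (f * v); split => //; split; [apply: (hL)|apply: (Fn_min _ hI hn); apply: Fn_right].
Qed.

Lemma ess_right (I : A -> Prop) : is_ideal I -> nonzero_set I -> essential_right I.
Proof.
move=> hI hn; split; first exact: (proj2 hI).
move=> L [_ _ hL] [v [hv nv]]; have [_ [f [hf nf]]] := part2 _ nv.
by exists (v * f); split => //; split; [apply: (hL)|apply: (Fn_min _ hI hn); apply: Fn_left].
Qed.

Lemma eYd_neq0 d : e * Y d != 0.
Proof.
apply: contra he => /eqP h0.
have := eYXe d d; rewrite h0 !mul0r.
by rewrite (_ : [forall i, d i == d i] = true) => [<-|]; last by apply/forallP.
Qed.
Lemma Xde_neq0 d : X d * e != 0.
Proof.
apply: contra he => /eqP h0.
have := eYXe d d; rewrite -mulrA h0 mulr0.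
by rewrite (_ : [forall i, d i == d i] = true) => [<-|]; last by apply/forallP.
Qed.

Lemma simple_left_gen d : simple_left (fun w => exists a, w = a * (e * Y d)).
Proof.
split.
  split; first by exists 0; rewrite mul0r.
    by move=> u v [a ->] [b ->]; exists (a + b); rewrite mulrDl.
  by move=> a0 u [a ->] /=; exists (a0 * a); rewrite !mulrA.
split; first by exists (e * Y d); split; [exists 1; rewrite mul1r|apply/eqP; apply: eYd_neq0].
move=> L' [_ _ hL'] sub.
case: (classic (exists v, L' v /\ v <> 0)) => [[v [hv nv]]|hn]; last first.
  by left => v hv; apply: NNPP => hne; apply: hn; exists v.
right => w; split; first by apply: sub.
move=> [b ->]; have [a Ev] := sub v hv.
have [g [d' hne]] := faith' _ (introN eqP nv).
have [c hco] := coef a g (fun _ => 0%N).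
rewrite X0 mulr1 in hco.
move: hne; rewrite Ev (_ : e * Y g * (a * (e * Y d)) * X d' * e = (e * Y g * a) * (e * Y d * X d' * e)); last by rewrite !mulrA.
rewrite eYXe; case: ifP => _; last by rewrite mulr0 eqxx.
rewrite mulrA hco => hne.
have c0 : c != 0 by apply: contraNneq hne => ->; rewrite scale0r.
rewrite -mulrA; have -> : e * Y d = (c^-1 *: (e * Y g)) * v.
  by rewrite Ev -scalerAl !mulrA hco -scalerAl scalerA mulVf // scale1r.
by rewrite mulrA; apply: (hL'); exact: hv.
Qed.

Lemma simple_right_gen d : simple_right (fun w => exists a, w = (X d * e) * a).
Proof.
split.
  split; first by exists 0; rewrite mulr0.
    by move=> u v [a ->] [b ->]; exists (a + b); rewrite mulrDr.
  by move=> a0 u [a ->] /=; exists (a * a0); rewrite mulrA.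
split; first by exists (X d * e); split; [exists 1; rewrite mulr1|apply/eqP; apply: Xde_neq0].
move=> L' [_ _ hL'] sub.
case: (classic (exists v, L' v /\ v <> 0)) => [[v [hv nv]]|hn]; last first.
  by left => v hv; apply: NNPP => hne; apply: hn; exists v.
right => w; split; first by apply: sub.
move=> [b ->]; have [a Ev] := sub v hv.
have [g [d' hne]] := faith' _ (introN eqP nv).
have [c hco] := coef a (fun _ => 0%N) d'.
rewrite Y0 mulr1 in hco.
move: hne; rewrite Ev (_ : e * Y g * (X d * e * a) * X d' * e = (e * Y g * X d * e) * (a * X d' * e)); last by rewrite !mulrA.
rewrite eYXe; case: ifP => _; last by rewrite mul0r eqxx.
rewrite !mulrA hco => hne.
have c0 : c != 0 by apply: contraNneq hne => ->; rewrite scale0r.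
have -> : X d * e = v * (c^-1 *: (X d' * e)).
  rewrite Ev -scalerAr (_ : X d * e * a * (X d' * e) = X d * (e * a * X d' * e)); last by rewrite !mulrA.
  by rewrite hco -scalerAr scalerA mulVf // scale1r.
by rewrite -mulrA; apply: (hL'); exact: hv.
Qed.

Lemma left_socle_eq : same_set (left_socle (A:=A)) (Fn x y).
Proof.
move=> v; split.
  apply: ideal_span; first exact: (proj1 Fn_ideal).
  move=> w [L [[hL [hn hs]] Lw]].
  have hL' : is_left_ideal (fun v => L v /\ Fn x y v).
    have [L0 LD LM] := hL; have [[F0 FD FM] _] := Fn_ideal.
    split; first by split.
      by move=> u u' [h1 h2] [h3 h4]; split; [apply: LD|apply: FD].
    by move=> a u [h1 h2]; split; [apply: LM|apply: FM].
  have [hz|hsame] := hs _ hL' (fun v h => proj1 h).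
    exfalso; have [u [hu nu]] := hn; have [[f [hf nf]] _] := part2 _ nu.
    apply: nf; apply: hz; split; first by have [_ _ LM] := hL; apply: LM.
    by apply: Fn_right.
  by have [] := proj2 (hsame w) Lw.
move/Fn_spanE; apply: inspan_mono => w [a [b ->]]; apply: inspan_of.
exists (fun w => exists a, w = a * (e * Y b)); split; first by apply: simple_left_gen.
by exists (X a); rewrite /E mulrA.
Qed.

Lemma right_socle_eq : same_set (right_socle (A:=A)) (Fn x y).
Proof.
move=> v; split.
  apply: ideal_span; first exact: (proj1 Fn_ideal).
  move=> w [L [[hL [hn hs]] Lw]].
  have hL' : is_right_ideal (fun v => L v /\ Fn x y v).
    have [L0 LD LM] := hL; have [_ [F0 FD FM]] := Fn_ideal.
    split; first by split.
      by move=> u u' [h1 h2] [h3 h4]; split; [apply: LD|apply: FD].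
    by move=> a u [h1 h2]; split; [apply: LM|apply: FM].
  have [hz|hsame] := hs _ hL' (fun v h => proj1 h).
    exfalso; have [u [hu nu]] := hn; have [_ [f [hf nf]]] := part2 _ nu.
    apply: nf; apply: hz; split; first by have [_ _ LM] := hL; apply: LM.
    by apply: Fn_left.
  by have [] := proj2 (hsame w) Lw.
move/Fn_spanE; apply: inspan_mono => w [a [b ->]]; apply: inspan_of.
exists (fun w => exists c, w = (X a * e) * c); split; first by apply: simple_right_gen.
by exists (Y b).
Qed.

Lemma Fn_simple : simple_bimodule (Fn x y).
Proof.
split; first exact: Fn_ideal.
split; first exact: Fn_nonzero.
move=> L' hL' sub.
case: (classic (exists v, L' v /\ v <> 0)) => [hn|hn]; last first.
  by left => v hv; apply: NNPP => hne; apply: hn; exists v.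
by right => v; split; [apply: sub|apply: (Fn_min _ hL' hn)].
Qed.

Lemma bimod_socle_eq : same_set (bimodule_socle (A:=A)) (Fn x y).
Proof.
move=> v; split.
  apply: ideal_span; first exact: (proj1 Fn_ideal).
  move=> w [L [[hL [hn hs]] Lw]].
  have [hz|hsame] := hs _ Fn_ideal (Fn_min _ hL hn).
    by exfalso; have := hz _ Fn_e; apply/eqP.
  by apply/hsame.
by move=> hv; apply: inspan_of; exists (Fn x y); split => //; apply: Fn_simple.
Qed.

Lemma prime_A : prime_algebra A.
Proof.
move=> I J hI hJ h0.
case: (classic (exists v, I v /\ v <> 0)) => [hnI|hn]; last first.
  by left => v hv; apply: NNPP => hne; apply: hn; exists v.
case: (classic (exists v, J v /\ v <> 0)) => [hnJ|hn]; last first.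
  by right => v hv; apply: NNPP => hne; apply: hn; exists v.
exfalso; have := h0 _ _ (e_in_ideal _ hI hnI) (e_in_ideal _ hJ hnJ).
by rewrite ee; apply/eqP.
Qed.

Lemma center_A : center_is_scalars A.
Proof.
move=> a; split; last first.
  by move=> [c ->] b; rewrite mulr_algl mulr_algr.
move=> hcomm.
have [c hco] := coef a (fun _ => 0%N) (fun _ => 0%N).
rewrite X0 Y0 mulr1 mulr1 in hco.
exists c; apply/eqP; rewrite -subr_eq0; apply/eqP; apply: faith => g d.
set b := a - c%:A.
have bc : forall w, b * w = w * b.
  by move=> w; rewrite /b mulrBl mulrBr hcomm mulr_algl mulr_algr.
rewrite -(bc (e * Y g)) (_ : b * (e * Y g) * X d * e = b * (e * Y g * X d * e)); last by rewrite !mulrA.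
rewrite eYXe; case: ifP => _; last by rewrite mulr0.
have -> : b * e = a * e - c *: e by rewrite /b mulrBl mulr_algl.
by rewrite -{1}ee mulrA hcomm hco subrr.
Qed.


Lemma main_all :
  center_is_scalars A /\
  (forall a : A, a <> 0 ->
     (exists f, Fn x y f /\ f * a <> 0) /\ (exists f, Fn x y f /\ a * f <> 0)) /\
  (is_ideal (Fn x y) /\ nonzero_set (Fn x y) /\
   (forall I : A -> Prop, is_ideal I -> nonzero_set I -> subset_of (Fn x y) I) /\
   same_set (set_prod (Fn x y) (Fn x y)) (Fn x y) /\
   essential_left (Fn x y) /\ essential_right (Fn x y) /\
   same_set (left_socle (A:=A)) (Fn x y) /\ same_set (right_socle (A:=A)) (Fn x y) /\
   same_set (bimodule_socle (A:=A)) (Fn x y) /\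
   simple_bimodule (Fn x y)) /\
  prime_algebra A /\
  (forall I : A -> Prop, is_ideal I -> nonzero_set I -> essential_left I /\ essential_right I).
Proof.
split; first exact: center_A.
split; first exact: part2.
split.
  split; first exact: Fn_ideal.
  split; first exact: Fn_nonzero.
  split; first exact: Fn_min.
  split; first exact: Fn_prod.
  split; first exact: (ess_left _ Fn_ideal Fn_nonzero).
  split; first exact: (ess_right _ Fn_ideal Fn_nonzero).
  split; first exact: left_socle_eq.
  split; first exact: right_socle_eq.
  split; first exact: bimod_socle_eq.
  exact: Fn_simple.
split; first exact: prime_A.
by move=> I hI hn; split; [apply: ess_left|apply: ess_right].
Qed.

End Alg.

Section Model.
Variables (K : fieldType) (n : nat).
Definition T := 'I_n -> nat.
Definition t0 : T := fun _ => 0%N.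

Definition ladd (f : (T -> K) -> (T -> K)) :=
  forall u v, f (fun t => u t + v t) = fun t => f u t + f v t.
Definition lhom (f : (T -> K) -> (T -> K)) :=
  forall a u, f (fun t => a * u t) = fun t => a * f u t.

Record linop := Linop { lf :> (T -> K) -> (T -> K); lfA : ladd lf; lfH : lhom lf }.

Lemma linop_eq (f g : linop) : lf f = lf g -> f = g.
Proof.
case: f g => f fA fH [g gA gH] /= E; subst g.
by rewrite (proof_irrelevance _ fA gA) (proof_irrelevance _ fH gH).
Qed.

Definition linop_eqb (f g : linop) : bool :=
  match excluded_middle_informative (f = g) with left _ => true | right _ => false end.
Lemma linop_eqP : Equality.axiom linop_eqb.
Proof. move=> f g; rewrite /linop_eqb; case: excluded_middle_informative => h; constructor => //. Qed.
HB.instance Definition _ := hasDecEq.Build linop linop_eqP.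

Definition linop_find (P : pred linop) (k : nat) : option linop :=
  match excluded_middle_informative (exists x, P x) with
  | left h => Some (proj1_sig (constructive_indefinite_description _ h))
  | right _ => None end.
Lemma linop_choice1 P k x : linop_find P k = Some x -> P x.
Proof. rewrite /linop_find; case: excluded_middle_informative => // h [<-].
exact: (proj2_sig (constructive_indefinite_description _ h)). Qed.
Lemma linop_choice2 (P : pred linop) : (exists x, P x) -> exists k, linop_find P k.
Proof. move=> h; exists 0%N; rewrite /linop_find; case: excluded_middle_informative => //. Qed.
Lemma linop_choice3 (P Q : pred linop) : P =1 Q -> linop_find P =1 linop_find Q.
Proof. move=> E; have -> : P = Q by apply: functional_extensionality. by []. Qed.
HB.instance Definition _ := hasChoice.Build linop linop_choice1 linop_choice2 linop_choice3.

Lemma zero_lin : ladd (fun _ _ => (0:K)) /\ lhom (fun _ _ => (0:K)).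
Proof. by split=> [u v|a u]; apply: functional_extensionality => t; rewrite ?addr0 ?mulr0. Qed.
Definition l0 := Linop _ (proj1 zero_lin) (proj2 zero_lin).

Lemma opp_lin (f : linop) : ladd (fun u t => - f u t) /\ lhom (fun u t => - f u t).
Proof. split=> [u v|a u]; apply: functional_extensionality => t.
  by rewrite lfA opprD. by rewrite lfH mulrN. Qed.
Definition lopp f := Linop _ (proj1 (opp_lin f)) (proj2 (opp_lin f)).

Lemma add_lin (f g : linop) : ladd (fun u t => f u t + g u t) /\ lhom (fun u t => f u t + g u t).
Proof. split=> [u v|a u]; apply: functional_extensionality => t.
  by rewrite !lfA addrACA. by rewrite !lfH mulrDr. Qed.
Definition ladd_ f g := Linop _ (proj1 (add_lin f g)) (proj2 (add_lin f g)).

Lemma l_addA : associative ladd_. Proof. by move=> f g h; apply: linop_eq; do 2 apply: functional_extensionality => ? /=; rewrite addrA. Qed.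
Lemma l_addC : commutative ladd_. Proof. by move=> f g; apply: linop_eq; do 2 apply: functional_extensionality => ? /=; rewrite addrC. Qed.
Lemma l_add0 : left_id l0 ladd_. Proof. by move=> f; apply: linop_eq; do 2 apply: functional_extensionality => ? /=; rewrite add0r. Qed.
Lemma l_addN : left_inverse l0 lopp ladd_. Proof. by move=> f; apply: linop_eq; do 2 apply: functional_extensionality => ? /=; rewrite addNr. Qed.
HB.instance Definition _ := GRing.isZmodule.Build linop l_addA l_addC l_add0 l_addN.

Lemma one_lin : ladd (fun u => u) /\ lhom (fun u => u).
Proof. by []. Qed.
Definition l1 := Linop _ (proj1 one_lin) (proj2 one_lin).
Lemma mul_lin (f g : linop) : ladd (fun u => f (g u)) /\ lhom (fun u => f (g u)).
Proof. by split=> [u v|a u]; rewrite ?lfA ?lfH. Qed.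
Definition lmul f g := Linop _ (proj1 (mul_lin f g)) (proj2 (mul_lin f g)).

Lemma l_mulA : associative lmul. Proof. by move=> f g h; apply: linop_eq. Qed.
Lemma l_mul1 : left_id l1 lmul. Proof. by move=> f; apply: linop_eq. Qed.
Lemma l_mulr1 : right_id l1 lmul. Proof. by move=> f; apply: linop_eq. Qed.
Lemma l_mulDl : left_distributive lmul +%R. Proof. by move=> f g h; apply: linop_eq. Qed.
Lemma l_mulDr : right_distributive lmul +%R.
Proof. by move=> f g h; apply: linop_eq; apply: functional_extensionality => u /=; rewrite lfA. Qed.
Lemma l_one0 : l1 != 0.
Proof. apply/eqP => /(congr1 (fun f : linop => lf f (fun _ => 1) t0)) /= /eqP; by rewrite oner_eq0. Qed.
HB.instance Definition _ := GRing.Zmodule_isNzRing.Build linop l_mulA l_mul1 l_mulr1 l_mulDl l_mulDr l_one0.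

Lemma scale_lin a (f : linop) : ladd (fun u t => a * f u t) /\ lhom (fun u t => a * f u t).
Proof. split=> [u v|b u]; apply: functional_extensionality => t.
  by rewrite lfA mulrDr. by rewrite lfH mulrCA. Qed.
Definition lscale a f := Linop _ (proj1 (scale_lin a f)) (proj2 (scale_lin a f)).
Lemma l_scaleA a b v : lscale a (lscale b v) = lscale (a * b) v.
Proof. by apply: linop_eq; do 2 apply: functional_extensionality => ? /=; rewrite mulrA. Qed.
Lemma l_scale1 : left_id 1 lscale.
Proof. by move=> f; apply: linop_eq; do 2 apply: functional_extensionality => ? /=; rewrite mul1r. Qed.
Lemma l_scaleDr : right_distributive lscale +%R.
Proof. by move=> a f g; apply: linop_eq; do 2 apply: functional_extensionality => ? /=; rewrite mulrDr. Qed.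
Lemma l_scaleDl v : {morph lscale^~ v: a b / a + b}.
Proof. by move=> a b; apply: linop_eq; do 2 apply: functional_extensionality => ? /=; rewrite mulrDl. Qed.
HB.instance Definition _ := GRing.Zmodule_isLmodule.Build K linop l_scaleA l_scale1 l_scaleDr l_scaleDl.
Lemma l_scalerAl a (u v : linop) : a *: (u * v) = (a *: u) * v.
Proof. by apply: linop_eq. Qed.
HB.instance Definition _ := GRing.Lmodule_isLalgebra.Build K linop l_scalerAl.
Lemma l_scalerAr a (u v : linop) : a *: (u * v) = u * (a *: v).
Proof. by apply: linop_eq; apply: functional_extensionality => w /=; rewrite lfH. Qed.
HB.instance Definition _ := GRing.Lalgebra_isAlgebra.Build K linop l_scalerAr.

Lemma lfM (f g : linop) u : lf (f * g) u = lf f (lf g u). Proof. by []. Qed.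
Lemma lf1 u : lf (1 : linop) u = u. Proof. by []. Qed.
Lemma lf0 u t : lf (0 : linop) u t = 0. Proof. by []. Qed.
Lemma lfB (f g : linop) u t : lf (f - g) u t = lf f u t - lf g u t. Proof. by []. Qed.

Definition upd (a : T) (i : 'I_n) (k : nat) : T := fun j => if j == i then k else a j.
Lemma upd_eq a i k : upd a i k i = k. Proof. by rewrite /upd eqxx. Qed.
Lemma upd_neq a i k j : j != i -> upd a i k j = a j. Proof. by rewrite /upd => /negbTE ->. Qed.
Lemma upd_upd a i k l : upd (upd a i k) i l = upd a i l.
Proof. by apply: functional_extensionality => j; rewrite /upd; case: (j == i). Qed.
Lemma upd_id a i : upd a i (a i) = a.
Proof. by apply: functional_extensionality => j; rewrite /upd; case: eqP => // ->. Qed.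
Lemma upd_comm a i j k l : i != j -> upd (upd a i k) j l = upd (upd a j l) i k.
Proof.
move=> h; apply: functional_extensionality => m; rewrite /upd.
case: (eqVneq m j) => [Emj|nmj]; case: (eqVneq m i) => [Emi|nmi] //.
by rewrite -Emj -Emi eqxx in h.
Qed.

Definition xf (i : 'I_n) (u : T -> K) (a : T) : K :=
  if a i is k.+1 then u (upd a i k) else 0.
Lemma x_lin i : ladd (xf i) /\ lhom (xf i).
Proof. by split=> [u v|c u]; apply: functional_extensionality => a; rewrite /xf; case: (a i) => [|k];
  rewrite ?addr0 ?mulr0. Qed.
Definition xop i := Linop _ (proj1 (x_lin i)) (proj2 (x_lin i)).
Definition yf (i : 'I_n) (u : T -> K) (a : T) : K := u (upd a i (a i).+1).
Lemma y_lin i : ladd (yf i) /\ lhom (yf i).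
Proof. by []. Qed.
Definition yop i := Linop _ (proj1 (y_lin i)) (proj2 (y_lin i)).

Lemma model_rel : jacobson_relations xop yop.
Proof.
split.
  move=> i; apply: linop_eq; do 2 apply: functional_extensionality => ?.
  by rewrite lfM /= /yf /xf upd_eq upd_upd upd_id.
move=> i j h; split; apply: linop_eq; apply: functional_extensionality => u;
  apply: functional_extensionality => a; rewrite !lfM /=.
- rewrite /xf /yf upd_neq //; case E: (a i) => [|k] //.
  by rewrite upd_neq 1?eq_sym // upd_comm // eq_sym.
- rewrite /xf; case E: (a i) => [|k]; case E': (a j) => [|l];
    rewrite ?upd_neq ?E ?E' // 1?eq_sym //.
  by rewrite upd_comm.
- rewrite /yf upd_neq 1?eq_sym // [in RHS]upd_neq //.
  by rewrite upd_comm // eq_sym.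
Qed.

Lemma model_e (s : seq 'I_n) u :
  lf (\prod_(i <- s) (1 - xop i * yop i)) u t0 = u t0.
Proof.
elim: s u => [|i s IH] u; first by rewrite big_nil.
by rewrite big_cons lfM lfB lf1 lfM /= /xf /t0 /= subr0 IH.
Qed.

End Model.

Section SubAlg.
Variables (K : fieldType) (A : algType K) (P : pred A) (hP : GRing.subsemialg_closed P).
Record subT (hh : GRing.subsemialg_closed P) := SubT { stval : A; _ : P stval }.
Definition ST := subT hP.
HB.instance Definition _ := [isSub of ST for (@stval hP)].
HB.instance Definition _ := [Choice of ST by <:].
HB.instance Definition _ := GRing.SubChoice_isSubAlgebra.Build K A P ST hP.
HB.instance Definition _ := GRing.RMorphism.on (val : ST -> A).
Definition mkST (a : A) (h : P a) : ST := @SubT hP a h.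
Lemma val_mkST a h : val (mkST a h) = a. Proof. by []. Qed.
End SubAlg.

Lemma gen_all (K : fieldType) (A : algType K) (n : nat) (x y : 'I_n -> A)
  (hyx : forall i, y i * x i = 1)
  (hc : forall i j, i != j ->
     [/\ x i * y j = y j * x i, x i * x j = x j * x i & y i * y j = y j * y i])
  (hU : forall (B : algType K) (bx bY : 'I_n -> B), jacobson_relations bx bY ->
    (exists f : {lrmorphism A -> B}, forall i, f (x i) = bx i /\ f (y i) = bY i) /\
    (forall f g : {lrmorphism A -> B},
        (forall i, f (x i) = g (x i) /\ f (y i) = g (y i)) -> forall a, f a = g a)) :
  forall a, inspan (monS K A n x y) a.
Proof.
pose Q := inspan (monS K A n x y).
pose P : pred A := fun a => if excluded_middle_informative (Q a) then true else false.
have PQ : forall a, P a <-> Q a.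
  by move=> a; rewrite /P; case: excluded_middle_informative.
have Qmul : forall u v, Q u -> Q v -> Q (u * v).
  move=> u v hu hv; apply: (@inspan_mul K A (monS K A n x y) (monS K A n x y)) hu hv.
  move=> s t [a [b ->]] [c [d ->]]; rewrite MM //; apply: inspan_of; do 2 eexists; reflexivity.
have hP : GRing.subsemialg_closed P.
  split.
  - rewrite unfold_in; apply/PQ; apply: inspan_of; exists (fun _ => 0%N), (fun _ => 0%N).
    by rewrite /M X0 Y0 mulr1.
  - split; first by rewrite unfold_in; apply/PQ; apply: inspan0.
    by move=> u v; rewrite !unfold_in => /PQ hu /PQ hv; apply/PQ; apply: inspanD.
  - by move=> c u; rewrite !unfold_in => /PQ hu; apply/PQ; apply: inspanZ.
  - by move=> u v; rewrite !unfold_in => /PQ hu /PQ hv; apply/PQ; apply: Qmul.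
have Px : forall i, P (x i).
  move=> i; apply/PQ; apply: inspan_of; exists (fun j => (j == i : nat)), (fun _ => 0%N).
  by rewrite /M Y0 mulr1 -xX.
have Py : forall i, P (y i).
  move=> i; apply/PQ; apply: inspan_of; exists (fun _ => 0%N), (fun j => (j == i : nat)).
  by rewrite /M X0 mul1r -yY.
pose bx (i : 'I_n) := @mkST K A P hP (x i) (Px i).
pose bY (i : 'I_n) := @mkST K A P hP (y i) (Py i).
have rel : jacobson_relations bx bY.
  split.
    by move=> i; apply: val_inj; rewrite rmorphM rmorph1 /= hyx.
  move=> i j h; have [h1 h2 h3] := hc i j h.
  by split; apply: val_inj; rewrite !rmorphM /=.
have [[f hf] _] := hU (@ST K A P hP) bx bY rel.
have [_ huniq] := hU A x y (conj hyx hc).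
pose g : {lrmorphism A -> A} := val \o f.
pose i0 : {lrmorphism A -> A} := idfun.
have hg : forall a, g a = i0 a.
  apply: huniq => i; rewrite /g /i0 /= (proj1 (hf i)) (proj2 (hf i)); by split.
move=> a; apply/PQ; have Ev : val (f a) = a by exact: (hg a).
by have := valP (f a); rewrite Ev.
Qed.

Unset Implicit Arguments.

Theorem proposition4p1 (K : fieldType) (n : nat) (A : algType K)
    (x y : 'I_n -> A) (hn : (0 < n)%N)
    (hA : is_jacobson_presentation x y) :
  (* (1) *) center_is_scalars A /\
  (* (2) *) (forall a : A, a <> 0 ->
               (exists f, Fn x y f /\ f * a <> 0) /\ (exists f, Fn x y f /\ a * f <> 0)) /\
  (* (3) *) (is_ideal (Fn x y) /\ nonzero_set (Fn x y) /\
             (forall I : A -> Prop, is_ideal I -> nonzero_set I -> subset_of (Fn x y) I) /\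
             same_set (set_prod (Fn x y) (Fn x y)) (Fn x y) /\
             essential_left (Fn x y) /\ essential_right (Fn x y) /\
             same_set (left_socle (A:=A)) (Fn x y) /\ same_set (right_socle (A:=A)) (Fn x y) /\
             same_set (bimodule_socle (A:=A)) (Fn x y) /\
             simple_bimodule (Fn x y)) /\
  (* (4) *) prime_algebra A /\
  (* (5) *) (forall I : A -> Prop, is_ideal I -> nonzero_set I -> essential_left I /\ essential_right I).
Proof.
have [[hyx hc] hU] := hA.
have hgen := @gen_all K A n x y hyx hc hU.
have he : e K A n x y != 0.
  have [[f hf] _] := hU (linop K n) (@xop K n) (@yop K n) (model_rel K n).
  apply/eqP => h0.
  have := congr1 (fun a => @lf K n (f a) (fun _ => 1) (t0 n)) h0.
  rewrite /= /e rmorph_prod (eq_bigr (fun i => 1 - @xop K n i * @yop K n i)); last first.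
    move=> i _; rewrite /ei rmorphB rmorph1 rmorphM; have [h1 h2] := hf i; by rewrite -h1 -h2.
  by rewrite model_e rmorph0 lf0 => /eqP; rewrite oner_eq0.
exact: (@main_all K A n x y hyx hc hgen he).
Qed.
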